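(* Let $\tau$ be a topology on a set $X$. For each $A \in \tau$ let $d_A : X \times X \to [0,\infty)$ be the characteristic function of the complement of $A\times A$ in $X \times X$, and let $\mathscr{P}_\tau := \{d_A : A \in \tau\}$. Then the topology on $X$ defined by $\mathscr{P}_\tau$, i.e. the topology generated by the family of sets $$U_{d_A,\varepsilon}(x) := \{\xi \in X : d_A(\xi,x) < \varepsilon\}, \quad A \in \tau,\ x \in X,\ \varepsilon \in \mathbb{R},\ \varepsilon > d_A(x,x),$$ coincides with $\tau$.
   Context: A weak pseudo-metric on $X$ is a symmetric map $d: X\times X\to[0,\infty)$ satisfying $d(x_1,x_2)\le d(x_1,x)+d(x,x_2)$ for all $x,x_1,x_2\in X$ and vanishing at at least one point of the diagonal of $X\times X$ (not necessarily on the whole diagonal). For a family $\mathscr{P}$ of such maps, the topology defined by $\mathscr{P}$ is the topology generated (as a subbase) by the sets $U_{d,\varepsilon}(x)=\{\xi\in X: d(\xi,x)<\varepsilon\}$ with $d\in\mathscr{P}$, $x\in X$, and real $\varepsilon>d(x,x)$. *)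

(* Defs.v *)
From Stdlib Require Import Reals ClassicalEpsilon.
Open Scope R_scope.

Section Defs.
Variable X : Type.

Definition is_topology (tau : (X -> Prop) -> Prop) : Prop :=
  tau (fun _ => False) /\ tau (fun _ => True) /\
  (forall F : (X -> Prop) -> Prop, (forall U, F U -> tau U) ->
     tau (fun x => exists U, F U /\ U x)) /\
  (forall U V, tau U -> tau V -> tau (fun x => U x /\ V x)).

Definition generated_topology (S : (X -> Prop) -> Prop) : (X -> Prop) -> Prop :=
  fun U => forall T, is_topology T -> (forall V, S V -> T V) -> T U.

Definition U_ball (d : X -> X -> R) (eps : R) (x : X) : X -> Prop :=
  fun xi => d xi x < eps.

Definition pm_subbase (P : (X -> X -> R) -> Prop) : (X -> Prop) -> Prop :=
  fun U => exists d x eps, P d /\ d x x < eps /\ U = U_ball d eps x.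

Definition topology_defined_by (P : (X -> X -> R) -> Prop) : (X -> Prop) -> Prop :=
  generated_topology (pm_subbase P).

Definition d_of (A : X -> Prop) : X -> X -> R :=
  fun x y => if excluded_middle_informative (A x /\ A y) then 0 else 1.

Definition P_of (tau : (X -> Prop) -> Prop) : (X -> X -> R) -> Prop :=
  fun d => exists A, tau A /\ d = d_of A.

End Defs.

(* Main.v *)
Require Import Defs.
From Stdlib Require Import Reals.
From Stdlib Require Import Lra FunctionalExtensionality PropExtensionality ClassicalEpsilon.

Lemma setext (X : Type) (A B : X -> Prop) : (forall x, A x <-> B x) -> A = B.
Proof. intro H; apply functional_extensionality; intro x; apply propositional_extensionality; auto. Qed.

Theorem theorem4p1 (X : Type) (tau : (X -> Prop) -> Prop) :
  is_topology X tau ->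
  forall U : X -> Prop, topology_defined_by X (P_of X tau) U <-> tau U.
Proof.
  intros Ht U. split.
  - intro H. apply H; [exact Ht|].
    intros V [d [x [eps [[A [HA ->]] [Hx ->]]]]].
    destruct Ht as [H0 [H1 _]].
    destruct (Rlt_dec 1 eps) as [Hl|Hl].
    + replace (U_ball X (d_of X A) eps x) with (fun _ : X => True); [exact H1|].
      apply setext; intro xi; unfold U_ball, d_of; split; intros _; auto.
      destruct (excluded_middle_informative _); lra.
    + apply Rnot_lt_le in Hl. unfold d_of in Hx. destruct (excluded_middle_informative (A x /\ A x)) as [[Ax _]|]; [|lra].
      replace (U_ball X (d_of X A) eps x) with A; [exact HA|].
      apply setext; intro xi; unfold U_ball, d_of; split; intro K.
      * revert K; destruct (excluded_middle_informative (A xi /\ A x)); intro K; first [tauto|lra].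
      * revert K; destruct (excluded_middle_informative (A xi /\ A x)); intro K; first [tauto|lra].
  - intros HU T HT HS.
    destruct HT as [_ [_ [HF _]]].
    set (F := fun V : X -> Prop => exists x, U x /\ V = U_ball X (d_of X U) 1 x).
    replace U with (fun x => exists V, F V /\ V x).
    + apply HF. intros V [x [Ux ->]]. apply HS.
      exists (d_of X U), x, 1. split; [exists U; auto|]. split; auto.
      unfold d_of; destruct (excluded_middle_informative (U x /\ U x)); [lra|tauto].
    + apply setext; intro xi; split.
      * intros [V [[x [Ux ->]] K]]. unfold U_ball, d_of in K.
        destruct (excluded_middle_informative (U xi /\ U x)); [tauto|lra].
      * intro Uxi. exists (U_ball X (d_of X U) 1 xi). split; [exists xi; auto|].
        unfold U_ball, d_of; destruct (excluded_middle_informative (U xi /\ U xi)); [lra|tauto].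
Qed.
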